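(* Consider a unit dual quaternion $\underline{\boldsymbol{x}}=\boldsymbol{r}+\varepsilon\frac{1}{2}\boldsymbol{p}\boldsymbol{r}$, with $\boldsymbol{r}\in\mathbb{S}^{3}$ and $\boldsymbol{p}\in\mathbb{H}_{p}$. Then \[ \operatorname{vec}_{8}\dot{\underline{\boldsymbol{x}}}=\underbrace{\begin{bmatrix}\boldsymbol{Q}\left(\boldsymbol{r}\right) & \boldsymbol{0}_{4\times3}\\ \frac{1}{2}\overset{+}{\boldsymbol{H}}_{4}\left(\boldsymbol{p}\right)\boldsymbol{Q}\left(\boldsymbol{r}\right) & \overset{-}{\boldsymbol{H}}_{4}\left(\boldsymbol{r}\right)\boldsymbol{Q}_{p} \end{bmatrix}}_{\boldsymbol{Q}_{8}\left(\underline{\boldsymbol{x}}\right)}\operatorname{vec}_{6}\dot{\underline{\boldsymbol{y}}}, \] where $\boldsymbol{Q}\left(\boldsymbol{r}\right)=\frac{\partial\operatorname{vec}_{4}\boldsymbol{r}}{\partial\operatorname{vec}_{3}\boldsymbol{y}}$ with $\boldsymbol{y}=\log\boldsymbol{r}$, $\boldsymbol{Q}_{p}=\begin{bmatrix}\boldsymbol{0}_{1\times3}\\ \boldsymbol{I}_{3}\end{bmatrix}$, and $\underline{\boldsymbol{y}}=\log\underline{\boldsymbol{x}}$. Furthermore, $\boldsymbol{Q}_{8}\left(\underline{\boldsymbol{x}}\right)\in\mathbb{R}^{8\times6}$ has full column rank; therefore $\boldsymbol{Q}_{8}\left(\underline{\boldsymbol{x}}\right)^{+}\boldsymbol{Q}_{8}\left(\underline{\boldsymbol{x}}\right)=\boldsymbol{I}$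 (with $\boldsymbol{Q}_8^{+}=(\boldsymbol{Q}_8^T\boldsymbol{Q}_8)^{-1}\boldsymbol{Q}_8^T$) and $\operatorname{vec}_{8}\dot{\underline{\boldsymbol{x}}}=\boldsymbol{0}$ if and only if $\operatorname{vec}_{6}\dot{\underline{\boldsymbol{y}}}=\boldsymbol{0}$.
   Context: Quaternions are $\boldsymbol{h}=h_{1}+\hat{\imath}h_{2}+\hat{\jmath}h_{3}+\hat{k}h_{4}$ with $\hat{\imath}^{2}=\hat{\jmath}^{2}=\hat{k}^{2}=\hat{\imath}\hat{\jmath}\hat{k}=-1$; $\mathbb{H}_p$ is the set of pure quaternions (zero real part), $\mathbb{S}^3$ the unit-norm quaternions. Dual quaternions are $\underline{\boldsymbol{h}}=\boldsymbol{h}+\varepsilon\boldsymbol{h}'$ with $\varepsilon^{2}=0$, $\varepsilon\neq0$. $\operatorname{vec}_{4}\boldsymbol{h}=[h_1\ h_2\ h_3\ h_4]^T$, $\operatorname{vec}_{8}\underline{\boldsymbol{h}}=[\operatorname{vec}_4\boldsymbol{h}^T\ \operatorname{vec}_4\boldsymbol{h}'^T]^T$; for a pure quaternion $\operatorname{vec}_3$ gives its three imaginary coefficients, and for a pure dual quaternion $\underline{\boldsymbol{h}}=h_{1}\hat{\imath}+h_{2}\hat{\jmath}+h_{3}\hat{k}+\varepsilon(h_{4}\hat{\imath}+h_{5}\hat{\jmath}+h_{6}\hat{k})$, $\operatorname{vec}_6\underline{\boldsymbol{h}}=[h_1\cdots h_6]^T$. The Hamilton operators satisfy $\operatorname{vec}_4(\boldsymbol{h}_1\boldsymbol{h}_2)=\overset{+}{\boldsymbol{H}}_4(\boldsymbol{h}_1)\operatorname{vec}_4\boldsymbol{h}_2=\overset{-}{\boldsymbol{H}}_4(\boldsymbol{h}_2)\operatorname{vec}_4\boldsymbol{h}_1$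 and are $\overset{+}{\boldsymbol{H}}_{4}(\boldsymbol{h})=\begin{bmatrix}h_{1} & -h_{2} & -h_{3} & -h_{4}\\ h_{2} & h_{1} & -h_{4} & h_{3}\\ h_{3} & h_{4} & h_{1} & -h_{2}\\ h_{4} & -h_{3} & h_{2} & h_{1}\end{bmatrix}$, $\overset{-}{\boldsymbol{H}}_{4}(\boldsymbol{h})=\begin{bmatrix}h_{1} & -h_{2} & -h_{3} & -h_{4}\\ h_{2} & h_{1} & h_{4} & -h_{3}\\ h_{3} & -h_{4} & h_{1} & h_{2}\\ h_{4} & h_{3} & -h_{2} & h_{1}\end{bmatrix}$. Write $\boldsymbol{r}=r_1+r_2\hat{\imath}+r_3\hat{\jmath}+r_4\hat{k}=\cos(\phi/2)+\boldsymbol{n}\sin(\phi/2)$ with $\boldsymbol{n}=n_x\hat{\imath}+n_y\hat{\jmath}+n_z\hat{k}$ a unit pure quaternion and $\phi\in[0,2\pi)$; $\log\boldsymbol{r}=\frac{\phi}{2}\boldsymbol{n}$ and $\log\underline{\boldsymbol{x}}=\frac{1}{2}(\phi\boldsymbol{n}+\varepsilon\boldsymbol{p})$. Explicitly, $\boldsymbol{Q}(\boldsymbol{r})=\begin{bmatrix}-r_{2} & -r_{3} & -r_{4}\\ \Gamma n_{x}^{2}+\Theta & \Gamma n_{x}n_{y} & \Gamma n_{x}n_{z}\\ \Gamma n_{y}n_{x} & \Gamma n_{y}^{2}+\Theta & \Gamma n_{y}n_{z}\\ \Gamma n_{z}n_{x} & \Gamma n_{z}n_{y} & \Gamma n_{z}^{2}+\Theta\end{bmatrix}$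 with $\Gamma=r_1-\Theta$, $\Theta=\frac{\sin(\phi/2)}{\phi/2}$ for $\phi\neq0$ and $\Theta=1$ for $\phi=0$. *)

(* Defs.v *)
From HB Require Import structures.
From mathcomp Require Import all_boot all_order all_algebra.
From mathcomp Require Import all_classical all_reals all_analysis.
Set Implicit Arguments. Unset Strict Implicit. Unset Printing Implicit Defensive.
Import Order.TTheory GRing.Theory Num.Theory.
Import numFieldNormedType.Exports.
Local Open Scope ring_scope.

Section Quat.
Variable R : realType.

(* k-th coefficient (0-based) of a quaternion h = h1 + i h2 + j h3 + k h4,
   stored as vec4 h = [h1 h2 h3 h4]^T *)
Definition qc (q : 'cV[R]_4) (k : nat) : R := q (inord k) 0.

Definition unitq (q : 'cV[R]_4) : Prop := \sum_(i < 4) q i 0 ^+ 2 = 1.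
Definition pureq (q : 'cV[R]_4) : Prop := qc q 0 = 0.

Definition mx_of_list m n (l : seq (seq R)) : 'M[R]_(m, n) :=
  \matrix_(i < m, j < n) nth 0 (nth [::] l i) j.

Definition Hp (h : 'cV[R]_4) : 'M[R]_4 :=
  let h1 := qc h 0 in let h2 := qc h 1 in let h3 := qc h 2 in let h4 := qc h 3 in
  mx_of_list 4 4 [:: [:: h1; -h2; -h3; -h4];
                     [:: h2;  h1; -h4;  h3];
                     [:: h3;  h4;  h1; -h2];
                     [:: h4; -h3;  h2;  h1]].
Definition Hm (h : 'cV[R]_4) : 'M[R]_4 :=
  let h1 := qc h 0 in let h2 := qc h 1 in let h3 := qc h 2 in let h4 := qc h 3 in
  mx_of_list 4 4 [:: [:: h1; -h2; -h3; -h4];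
                     [:: h2;  h1;  h4; -h3];
                     [:: h3; -h4;  h1;  h2];
                     [:: h4;  h3; -h2;  h1]].

Definition conjq (q : 'cV[R]_4) : 'cV[R]_4 :=
  \col_(i < 4) (if i == ord0 then q i 0 else - q i 0).

Definition vec3 (q : 'cV[R]_4) : 'cV[R]_3 := \col_(i < 3) q (lift ord0 i) 0.

(* r = cos(phi/2) + n sin(phi/2), phi in [0, 2 pi] (r unit) *)
Definition phi (r : 'cV[R]_4) : R := 2 * acos (qc r 0).
Definition nvec (r : 'cV[R]_4) : 'cV[R]_3 := (sin (phi r / 2))^-1 *: vec3 r.
Definition Theta (r : 'cV[R]_4) : R :=
  if phi r == 0 then 1 else sin (phi r / 2) / (phi r / 2).
Definition Gamma (r : 'cV[R]_4) : R := qc r 0 - Theta r.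

Definition logr (r : 'cV[R]_4) : 'cV[R]_3 := (phi r / 2) *: nvec r.

Definition Qr (r : 'cV[R]_4) : 'M[R]_(4, 3) :=
  let n := nvec r in let G := Gamma r in let T := Theta r in
  let nx := n 0 0 in let ny := n (inord 1) 0 in let nz := n (inord 2) 0 in
  mx_of_list 4 3 [:: [:: - qc r 1; - qc r 2; - qc r 3];
                     [:: G * nx ^+ 2 + T; G * nx * ny; G * nx * nz];
                     [:: G * ny * nx; G * ny ^+ 2 + T; G * ny * nz];
                     [:: G * nz * nx; G * nz * ny; G * nz ^+ 2 + T]].

Definition Qp : 'M[R]_(4, 3) := col_mx (0 : 'M[R]_(1, 3)) (1%:M : 'M[R]_3).

(* dual quaternions: vec8 x = [vec4 x ; vec4 x'] *)
Definition prim (x : 'cV[R]_(4 + 4)) : 'cV[R]_4 := usubmx x.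
Definition dual (x : 'cV[R]_(4 + 4)) : 'cV[R]_4 := dsubmx x.

(* vec8 of x = r + eps (1/2) p r *)
Definition xof (r p : 'cV[R]_4) : 'cV[R]_(4 + 4) :=
  col_mx r ((1 / 2 : R) *: (Hp p *m r)).

(* translation p recovered from a unit dual quaternion: p = 2 x' r^* *)
Definition pof (x : 'cV[R]_(4 + 4)) : 'cV[R]_4 :=
  (2 : R) *: (Hp (dual x) *m conjq (prim x)).

(* vec6 (log x), log x = (1/2)(phi n + eps p) *)
Definition dlog (x : 'cV[R]_(4 + 4)) : 'cV[R]_(3 + 3) :=
  col_mx (logr (prim x)) ((1 / 2 : R) *: vec3 (pof x)).

Definition Q8 (x : 'cV[R]_(4 + 4)) : 'M[R]_(4 + 4, 3 + 3) :=
  block_mx (Qr (prim x)) (0 : 'M[R]_(4, 3))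
           ((1 / 2 : R) *: (Hp (pof x) *m Qr (prim x))) (Hm (prim x) *m Qp).

End Quat.

(* Main.v *)
Require Import Defs.
From HB Require Import structures.
From mathcomp Require Import all_boot all_order all_algebra.
From mathcomp Require Import all_classical all_reals all_analysis.
Import Order.TTheory GRing.Theory Num.Theory.
Import numFieldNormedType.Exports.
Local Open Scope classical_set_scope.
Local Open Scope ring_scope.
From mathcomp Require Import ring lra.
Set Implicit Arguments. Unset Strict Implicit.
Section S.
Variable R : realType.
Implicit Types (f g : R -> R) (t df dg : R).
Lemma scE (a b : R) : a *: b = a * b. Proof. by []. Qed.

Lemma LL (F f g : R -> R) t0 : (forall t, F t = g t * f t) -> f t0 = 0 ->
  derivable f t0 1 -> {for t0, continuous g} -> 'D_1 F t0 = g t0 * 'D_1 f t0.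
Proof.
move=> HF f0 Hf Hg.
rewrite /derive.
have -> : (fun h : R => h^-1 *: ((F \o shift t0) (h *: 1) - F t0)) =
   (fun h => g (h + t0) * (h^-1 *: ((f \o shift t0) (h *: 1) - f t0))).
  apply/funext => h; rewrite /= !HF f0 !scE mulr1 mulr0 !subr0; ring.
apply: cvg_lim => //.
apply: cvgM; last exact: Hf.
have c1 : (fun h : R => h + t0) @ 0^' --> t0.
  apply: cvg_within_filter.
  have c0 : (fun h : R => h + t0) @ (nbhs (0:R)) --> (0 + t0).
    apply: cvgD; [exact: cvg_id | exact: cvg_cst].
  by rewrite add0r in c0.
exact: (cvg_comp _ _ c1 Hg).
Qed.

Lemma Dcvg (f : R -> R) t : derivable f t 1 ->
  (fun h : R => h^-1 *: ((f \o shift t) (h *: 1) - f t)) @ 0^' --> 'D_1 f t.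
Proof. by move=> H; exact: H. Qed.

Definition S1 (u : R) := if u == 0 then 1 else sin u / u.

Lemma S1_cont : {for 0, continuous S1}.
Proof.
apply/continuous_withinNx.
have Hs := @derivable_sin R 0.
have H1 : 'D_1 sin (0:R) = 1.
  by rewrite (@derive_val _ _ _ _ _ _ _ (is_derive_sin 0)) cos0.
have Hc := Dcvg Hs. rewrite H1 in Hc.
rewrite /S1 eqxx.
apply: cvg_trans Hc.
apply: near_eq_cvg.
near=> h.
have hn0 : h != 0 by near: h; exact: nbhs_dnbhs_neq.
by rewrite /= (negbTE hn0) sin0 subr0 addr0 scE mulrC /GRing.scale /= mulr1.
Unshelve. all: by end_near.
Qed.

Lemma dM f g t df dg : is_derive t 1 f df -> is_derive t 1 g dg ->
  is_derive t 1 (fun s => f s * g s) (f t * dg + df * g t).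
Proof. move=> Hf Hg; rewrite [df * _]mulrC; exact: is_deriveM. Qed.
Lemma dD f g t df dg : is_derive t 1 f df -> is_derive t 1 g dg ->
  is_derive t 1 (fun s => f s + g s) (df + dg).
Proof. move=> Hf Hg. exact: is_deriveD. Qed.
Lemma dB f g t df dg : is_derive t 1 f df -> is_derive t 1 g dg ->
  is_derive t 1 (fun s => f s - g s) (df - dg).
Proof. move=> Hf Hg. exact: is_deriveB. Qed.
Lemma dC t (c : R) : is_derive t 1 (fun _ => c) 0.
Proof. exact: is_derive_cst. Qed.
Lemma dsin f t df : is_derive t 1 f df -> is_derive t 1 (fun s => sin (f s)) (cos (f t) * df).
Proof. move=> Hf. exact: (@is_derive1_comp _ sin f). Qed.
Lemma dcos f t df : is_derive t 1 f df -> is_derive t 1 (fun s => cos (f s)) (- sin (f t) * df).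
Proof. move=> Hf. exact: (@is_derive1_comp _ cos f). Qed.
Lemma dsqrt f t df : 0 < f t -> is_derive t 1 f df -> is_derive t 1 (fun s => Num.sqrt (f s)) ((2 * Num.sqrt (f t))^-1 * df).
Proof. move=> H Hf. apply: (@is_derive1_comp _ Num.sqrt f) => //. exact: is_derive1_sqrt. Qed.

Lemma solve_lin (A B th d : R) : th != 0 -> A = th * d + B -> d = (A - B) / th.
Proof. by move=> H ->; field. Qed.

Lemma core (f0 f1 f2 f3 g1 g2 g3 fi gi : R -> R) t0 :
  (forall t, f0 t ^+ 2 + f1 t ^+ 2 + f2 t ^+ 2 + f3 t ^+ 2 = 1) ->
  (forall t, acos (f0 t) < pi) ->
  (forall t, g1 t = acos (f0 t) * (sin (acos (f0 t)))^-1 * f1 t) ->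
  (forall t, g2 t = acos (f0 t) * (sin (acos (f0 t)))^-1 * f2 t) ->
  (forall t, g3 t = acos (f0 t) * (sin (acos (f0 t)))^-1 * f3 t) ->
  (forall t, gi t = acos (f0 t) * (sin (acos (f0 t)))^-1 * fi t) ->
  (forall t, fi t ^+ 2 <= f1 t ^+ 2 + f2 t ^+ 2 + f3 t ^+ 2) ->
  derivable f0 t0 1 -> derivable f1 t0 1 -> derivable f2 t0 1 -> derivable f3 t0 1 ->
  derivable fi t0 1 ->
  derivable g1 t0 1 -> derivable g2 t0 1 -> derivable g3 t0 1 -> derivable gi t0 1 ->
  let th := acos (f0 t0) in let s := sin th in
  let T := if th == 0 then 1 else s / th in
  'D_1 f0 t0 = - (f1 t0 * 'D_1 g1 t0 + f2 t0 * 'D_1 g2 t0 + f3 t0 * 'D_1 g3 t0) /\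
  'D_1 fi t0 = (f0 t0 - T) * (s^-1 * fi t0) *
     (s^-1 * (f1 t0 * 'D_1 g1 t0 + f2 t0 * 'D_1 g2 t0 + f3 t0 * 'D_1 g3 t0))
     + T * 'D_1 gi t0.
Proof.
move=> Hu Hpi Hg1 Hg2 Hg3 Hgi Hfi D0 D1 D2 D3 Di E1 E2 E3 Ei th s T.
have Hc t : -1 <= f0 t <= 1.
  have h := Hu t; apply/andP; split; nra.
have Hcos t : cos (acos (f0 t)) = f0 t by rewrite acosK // in_itv /= Hc.
have Hth0 t : 0 <= acos (f0 t) := acos_ge0 (Hc t).
have Hsin2 t : sin (acos (f0 t)) ^+ 2 = f1 t ^+ 2 + f2 t ^+ 2 + f3 t ^+ 2.
  by rewrite sin2cos2 Hcos -(Hu t); ring.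
have Hspos t : acos (f0 t) != 0 -> 0 < sin (acos (f0 t)).
  by move=> H; apply: sin_gt0_pi; rewrite Hpi andbT lt_neqAle eq_sym H Hth0.
have Hz t : acos (f0 t) = 0 -> [/\ f0 t = 1, f1 t = 0, f2 t = 0, f3 t = 0 & fi t = 0].
  move=> H; have h := Hsin2 t; rewrite H sin0 expr0n /= in h.
  have h2 := Hfi t; have h0 := Hcos t; rewrite H cos0 in h0.
  split => //; nra.
pose N t := g1 t * g1 t + g2 t * g2 t + g3 t * g3 t.
have HN t : Num.sqrt (N t) = acos (f0 t).
  have -> : N t = acos (f0 t) ^+ 2.
    case: (eqVneq (acos (f0 t)) 0) => H.
      by rewrite /N Hg1 Hg2 Hg3 H; ring.
    have sp := Hspos t H.
    have Hs := Hsin2 t.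
    rewrite /N Hg1 Hg2 Hg3.
    transitivity (acos (f0 t) ^+ 2 * (sin (acos (f0 t)))^-1 ^+ 2 * (f1 t ^+ 2 + f2 t ^+ 2 + f3 t ^+ 2)); first by ring.
    rewrite -Hs; field; exact: lt0r_neq0.
  by rewrite sqrtr_sqr ger0_norm.
have HJ t : sin (acos (f0 t)) * gi t = acos (f0 t) * fi t.
  case: (eqVneq (acos (f0 t)) 0) => H; first by rewrite H sin0 !mul0r.
  have sp := Hspos t H.
  rewrite Hgi; field; exact: lt0r_neq0.
have I0 := derivableP D0; have I1 := derivableP D1; have I2 := derivableP D2.
have I3 := derivableP D3; have Ii := derivableP Di.
have J1 := derivableP E1; have J2 := derivableP E2; have J3 := derivableP E3.
have Ji := derivableP Ei.
have DN := dD (dD (dM J1 J1) (dM J2 J2)) (dM J3 J3).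
case: (eqVneq th 0) => Hth.
-
  have [F0 F1 F2 F3 Fi] := Hz t0 Hth.
  have Gi : gi t0 = 0 by rewrite Hgi Fi !mulr0.
  have HT : T = 1 by rewrite /T Hth eqxx.
  have Hs : s = 0 by rewrite /s Hth sin0.
  rewrite HT Hs invr0 !mul0r !mulr0 add0r mul1r F1 F2 F3 !mul0r !addr0 oppr0.
  split.
  + have L := dD (dD (dD (dM I0 I0) (dM I1 I1)) (dM I2 I2)) (dM I3 I3).
    have EU : (fun t => f0 t * f0 t + f1 t * f1 t + f2 t * f2 t + f3 t * f3 t) = (fun _ => 1).
      by apply/funext => t; rewrite -(Hu t) !expr2.
    rewrite EU in L.
    have e := etrans (esym (@derive_val _ _ _ _ _ _ _ L)) (@derive_val _ _ _ _ _ _ _ (dC t0 1)).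
    rewrite F0 F1 F2 F3 !mul0r !mulr0 !addr0 mul1r mulr1 in e.
    lra.
  + pose g t := S1 (Num.sqrt (N t)).
    have HF t : fi t = g t * gi t.
      rewrite /g HN /S1.
      case: (eqVneq (acos (f0 t)) 0) => H.
        by have [_ _ _ _ ->] := Hz t H; rewrite Hgi H !mul0r mulr0.
      rewrite Hgi.
      have sp := Hspos t H.
      field; apply/andP; split => //; exact: lt0r_neq0.
    rewrite (@LL fi gi g t0 HF Gi Ei).
      by rewrite /g HN -/th Hth /S1 eqxx mul1r.
    apply: continuous_comp.
      apply: continuous_comp; last exact: sqrt_continuous.
      apply: differentiable_continuous.
      apply/derivable1_diffP.
      exact: (@ex_derive _ _ _ _ _ _ _ DN).
    by rewrite HN -/th Hth; exact: S1_cont.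
-
  have sp : 0 < s := Hspos t0 Hth.
  have Npos : 0 < N t0.
    by rewrite -sqrtr_gt0 HN lt_neqAle eq_sym Hth Hth0.
  have Dth := dsqrt Npos DN.
  have HT : T = s / th by rewrite /T (negbTE Hth).
  rewrite HT.
  split.
  + have -> : 'D_1 f0 t0 = 'D_1 (fun t => cos (Num.sqrt (N t))) t0.
      by congr derive; apply/funext => t; rewrite HN Hcos.
    rewrite (@derive_val _ _ _ _ _ _ _ (dcos Dth)).
    rewrite HN -/th -/s !Hg1 !Hg2 !Hg3 -/th -/s.
    field; apply/andP; split => //; exact: lt0r_neq0.
  + have L := dM (dsin Dth) Ji.
    have Rr := dM Dth Ii.
    have EJ : (fun t => sin (Num.sqrt (N t)) * gi t) = (fun t => Num.sqrt (N t) * fi t).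
      by apply/funext => t; rewrite HN HJ.
    rewrite EJ in L.
    have e := etrans (esym (@derive_val _ _ _ _ _ _ _ L)) (@derive_val _ _ _ _ _ _ _ Rr).
    rewrite HN -/th -/s Hcos in e.
    move: e; rewrite !Hg1 !Hg2 !Hg3 !Hgi -/th -/s; generalize ('D_1 fi t0) => d.
    move=> e; rewrite (solve_lin Hth e).
    by field; rewrite Hth lt0r_neq0.
Qed.
Definition qc3 (v : 'cV[R]_3) (k : nat) : R := v (inord k) 0.
Lemma E4 (v : 'cV[R]_4) (o : 'I_4) j : v o j = qc v o.
Proof. by rewrite /qc inord_val (ord1 j). Qed.
Lemma E3 (v : 'cV[R]_3) (o : 'I_3) j : v o j = qc3 v o.
Proof. by rewrite /qc3 inord_val (ord1 j). Qed.
Ltac ex := rewrite /qc /qc3 ?mxE ?big_ord_recr ?big_ord0 /= ?mxE /= ?inordK //= ?E4 ?E3 /= ?inordK //=.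

Lemma qcZ a (M : 'cV[R]_4) k : qc (a *: M) k = a * qc M k.
Proof. by rewrite /qc mxE. Qed.
Lemma qcD (M N : 'cV[R]_4) k : qc (M + N) k = qc M k + qc N k.
Proof. by rewrite /qc mxE. Qed.
Lemma qc3Z a (M : 'cV[R]_3) k : qc3 (a *: M) k = a * qc3 M k.
Proof. by rewrite /qc3 mxE. Qed.

Lemma HpM0 (p v : 'cV[R]_4) : qc (Hp p *m v) 0 = qc p 0 * qc v 0 - qc p 1 * qc v 1 - qc p 2 * qc v 2 - qc p 3 * qc v 3.
Proof. ex. ring. Qed.
Lemma HpM1 (p v : 'cV[R]_4) : qc (Hp p *m v) 1 = qc p 1 * qc v 0 + qc p 0 * qc v 1 - qc p 3 * qc v 2 + qc p 2 * qc v 3.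
Proof. ex. ring. Qed.
Lemma HpM2 (p v : 'cV[R]_4) : qc (Hp p *m v) 2 = qc p 2 * qc v 0 + qc p 3 * qc v 1 + qc p 0 * qc v 2 - qc p 1 * qc v 3.
Proof. ex. ring. Qed.
Lemma HpM3 (p v : 'cV[R]_4) : qc (Hp p *m v) 3 = qc p 3 * qc v 0 - qc p 2 * qc v 1 + qc p 1 * qc v 2 + qc p 0 * qc v 3.
Proof. ex. ring. Qed.
Lemma HmM0 (p v : 'cV[R]_4) : qc (Hm p *m v) 0 = qc p 0 * qc v 0 - qc p 1 * qc v 1 - qc p 2 * qc v 2 - qc p 3 * qc v 3.
Proof. ex. ring. Qed.
Lemma HmM1 (p v : 'cV[R]_4) : qc (Hm p *m v) 1 = qc p 1 * qc v 0 + qc p 0 * qc v 1 + qc p 3 * qc v 2 - qc p 2 * qc v 3.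
Proof. ex. ring. Qed.
Lemma HmM2 (p v : 'cV[R]_4) : qc (Hm p *m v) 2 = qc p 2 * qc v 0 - qc p 3 * qc v 1 + qc p 0 * qc v 2 + qc p 1 * qc v 3.
Proof. ex. ring. Qed.
Lemma HmM3 (p v : 'cV[R]_4) : qc (Hm p *m v) 3 = qc p 3 * qc v 0 + qc p 2 * qc v 1 - qc p 1 * qc v 2 + qc p 0 * qc v 3.
Proof. ex. ring. Qed.
Lemma conjq0 (q : 'cV[R]_4) : qc (conjq q) 0 = qc q 0.
Proof. ex. rewrite -(inj_eq val_inj) /= inordK //=. Qed.
Lemma conjq1 (q : 'cV[R]_4) : qc (conjq q) 1 = - qc q 1.
Proof. ex; rewrite -(inj_eq val_inj) /= inordK //=. Qed.
Lemma conjq2 (q : 'cV[R]_4) : qc (conjq q) 2 = - qc q 2.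
Proof. ex; rewrite -(inj_eq val_inj) /= inordK //=. Qed.
Lemma conjq3 (q : 'cV[R]_4) : qc (conjq q) 3 = - qc q 3.
Proof. ex; rewrite -(inj_eq val_inj) /= inordK //=. Qed.
Lemma QpME (v : 'cV[R]_3) : Qp R *m v = col_mx (0 : 'cV_1) v.
Proof. rewrite /Qp. have := @mul_col_mx R 1 3 3 1 0 1%:M v. by rewrite mul0mx mul1mx. Qed.
Lemma colq0 (v : 'cV[R]_3) : qc (col_mx (0 : 'cV_1) v) 0 = 0.
Proof.
rewrite /qc; transitivity (col_mx (0 : 'cV_1) v (lshift 3 ord0) 0); last first.
  by rewrite col_mxEu mxE.
by congr (fun_of_matrix _ _ _); apply/val_inj; rewrite /= inordK.
Qed.
Lemma colqS (v : 'cV[R]_3) (k : nat) : (k < 3)%N -> qc (col_mx (0 : 'cV_1) v) k.+1 = qc3 v k.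
Proof.
move=> hk; rewrite /qc /qc3; transitivity (col_mx (0 : 'cV_1) v (rshift 1 (inord k : 'I_3)) 0); last first.
  by rewrite col_mxEd.
by congr (fun_of_matrix _ _ _); apply/val_inj; rewrite /= !inordK.
Qed.

Lemma cV4P (u v : 'cV[R]_4) : qc u 0 = qc v 0 -> qc u 1 = qc v 1 -> qc u 2 = qc v 2 -> qc u 3 = qc v 3 -> u = v.
Proof.
move=> h0 h1 h2 h3; apply/matrixP => i j; rewrite (ord1 j) !E4.
by case: i => [[|[|[|[|//]]]] Hi] /=.
Qed.
Lemma cV3P (u v : 'cV[R]_3) : qc3 u 0 = qc3 v 0 -> qc3 u 1 = qc3 v 1 -> qc3 u 2 = qc3 v 2 -> u = v.
Proof.
move=> h0 h1 h2; apply/matrixP => i j; rewrite (ord1 j) !E3.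
by case: i => [[|[|[|//]]] Hi] /=.
Qed.
Lemma vec3E (q : 'cV[R]_4) (k : nat) : (k < 3)%N -> qc3 (vec3 q) k = qc q k.+1.
Proof.
move=> hk; rewrite /qc3 /vec3 mxE /qc; congr (q _ _); apply/val_inj.
by rewrite /= /bump /= !inordK.
Qed.
Lemma nvecE (r : 'cV[R]_4) (k : nat) : (k < 3)%N -> qc3 (nvec r) k = (sin (phi r / 2))^-1 * qc r k.+1.
Proof. by move=> hk; rewrite /nvec qc3Z vec3E. Qed.
Lemma logrE (r : 'cV[R]_4) (k : nat) : (k < 3)%N -> qc3 (logr r) k = phi r / 2 * ((sin (phi r / 2))^-1 * qc r k.+1).
Proof. by move=> hk; rewrite /logr qc3Z nvecE. Qed.
Lemma unitqE (r : 'cV[R]_4) : unitq r -> qc r 0 ^+ 2 + qc r 1 ^+ 2 + qc r 2 ^+ 2 + qc r 3 ^+ 2 = 1.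
Proof. rewrite /unitq => <-. ex. by rewrite add0r. Qed.
Lemma QrM0 (r : 'cV[R]_4) (v : 'cV[R]_3) : qc (Qr r *m v) 0 = - (qc r 1 * qc3 v 0 + qc r 2 * qc3 v 1 + qc r 3 * qc3 v 2).
Proof. ex. ring. Qed.
Lemma QrM1 (r : 'cV[R]_4) (v : 'cV[R]_3) : qc (Qr r *m v) 1 =
  (Gamma r * qc3 (nvec r) 0 ^+ 2 + Theta r) * qc3 v 0 + Gamma r * qc3 (nvec r) 0 * qc3 (nvec r) 1 * qc3 v 1
  + Gamma r * qc3 (nvec r) 0 * qc3 (nvec r) 2 * qc3 v 2.
Proof. ex. ring. Qed.
Lemma QrM2 (r : 'cV[R]_4) (v : 'cV[R]_3) : qc (Qr r *m v) 2 =
  Gamma r * qc3 (nvec r) 1 * qc3 (nvec r) 0 * qc3 v 0 + (Gamma r * qc3 (nvec r) 1 ^+ 2 + Theta r) * qc3 v 1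
  + Gamma r * qc3 (nvec r) 1 * qc3 (nvec r) 2 * qc3 v 2.
Proof. ex. ring. Qed.
Lemma QrM3 (r : 'cV[R]_4) (v : 'cV[R]_3) : qc (Qr r *m v) 3 =
  Gamma r * qc3 (nvec r) 2 * qc3 (nvec r) 0 * qc3 v 0 + Gamma r * qc3 (nvec r) 2 * qc3 (nvec r) 1 * qc3 v 1
  + (Gamma r * qc3 (nvec r) 2 ^+ 2 + Theta r) * qc3 v 2.
Proof. ex. ring. Qed.

Lemma primK (r p : 'cV[R]_4) : prim (xof r p) = r.
Proof. by rewrite /prim /xof col_mxKu. Qed.
Lemma dualK (r p : 'cV[R]_4) : dual (xof r p) = (1/2 : R) *: (Hp p *m r).
Proof. by rewrite /dual /xof col_mxKd. Qed.

Lemma pofK (r p : 'cV[R]_4) : unitq r -> pureq p -> pof (xof r p) = p.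
Proof.
move=> /unitqE Hu; rewrite /pureq => Hp0.
rewrite /pof dualK primK.
apply: cV4P; rewrite qcZ ?HpM0 ?HpM1 ?HpM2 ?HpM3 !qcZ !HpM0 !HpM1 !HpM2 !HpM3 !conjq0 !conjq1 !conjq2 !conjq3 Hp0;
 (match goal with |- _ = ?X => transitivity (X * (qc r 0 ^+ 2 + qc r 1 ^+ 2 + qc r 2 ^+ 2 + qc r 3 ^+ 2)); [|by rewrite Hu mulr1] end);
 by rewrite ?Hp0; field.
Qed.

Lemma qc_derivable (F : R -> 'cV[R]_4) t (k : nat) : derivable F t 1 -> derivable (fun s => qc (F s) k) t 1.
Proof. by move=> /derivable_mxP H; exact: H. Qed.
Lemma qc3_derivable (F : R -> 'cV[R]_3) t (k : nat) : derivable F t 1 -> derivable (fun s => qc3 (F s) k) t 1.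
Proof. by move=> /derivable_mxP H; exact: H. Qed.
Lemma qc_derive (F : R -> 'cV[R]_4) t (k : nat) : derivable F t 1 -> qc ('D_1 F t) k = 'D_1 (fun s => qc (F s) k) t.
Proof. by move=> H; rewrite /qc derive_mx // mxE. Qed.
Lemma qc3_derive (F : R -> 'cV[R]_3) t (k : nat) : derivable F t 1 -> qc3 ('D_1 F t) k = 'D_1 (fun s => qc3 (F s) k) t.
Proof. by move=> H; rewrite /qc3 derive_mx // mxE. Qed.

Lemma derive_col m1 m2 (f : R -> 'cV[R]_m1) (g : R -> 'cV[R]_m2) t :
  derivable (fun s => col_mx (f s) (g s)) t 1 ->
  [/\ derivable f t 1, derivable g t 1 &
     'D_1 (fun s => col_mx (f s) (g s)) t = col_mx ('D_1 f t) ('D_1 g t)].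
Proof.
move=> H; have /derivable_mxP H' := H.
have Df : derivable f t 1.
  apply/derivable_mxP => i j; have := H' (lshift m2 i) j.
  by under eq_fun do rewrite col_mxEu.
have Dg : derivable g t 1.
  apply/derivable_mxP => i j; have := H' (rshift m1 i) j.
  by under eq_fun do rewrite col_mxEd.
split => //.
rewrite derive_mx // (derive_mx Df) (derive_mx Dg).
apply/matrixP => i j; rewrite mxE.
rewrite -[i]splitK; case: (fintype.split i) => k /=.
  rewrite col_mxEu mxE; by under eq_fun do rewrite col_mxEu.
rewrite col_mxEd mxE; by under eq_fun do rewrite col_mxEd.
Qed.

Lemma qc0 (k : nat) : qc (0 : 'cV[R]_4) k = 0.
Proof. by rewrite /qc mxE. Qed.
Lemma qc30 (k : nat) : qc3 (0 : 'cV[R]_3) k = 0.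
Proof. by rewrite /qc3 mxE. Qed.
Lemma phiE (r : 'cV[R]_4) : phi r / 2 = acos (qc r 0).
Proof. by rewrite /phi; field. Qed.

Lemma quat_inj (r0 r1 r2 r3 q1 q2 q3 : R) :
 r0 ^+ 2 + r1 ^+ 2 + r2 ^+ 2 + r3 ^+ 2 = 1 ->
 r0 * 0 - r1 * q1 - r2 * q2 - r3 * q3 = 0 ->
 r1 * 0 + r0 * q1 + r3 * q2 - r2 * q3 = 0 ->
 r2 * 0 - r3 * q1 + r0 * q2 + r1 * q3 = 0 ->
 r3 * 0 + r2 * q1 - r1 * q2 + r0 * q3 = 0 -> [/\ q1 = 0, q2 = 0 & q3 = 0].
Proof.
move=> U W0 W1 W2 W3.
have E1 : q1 = - r1 * (r0 * 0 - r1 * q1 - r2 * q2 - r3 * q3) + r0 * (r1 * 0 + r0 * q1 + r3 * q2 - r2 * q3)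
   - r3 * (r2 * 0 - r3 * q1 + r0 * q2 + r1 * q3) + r2 * (r3 * 0 + r2 * q1 - r1 * q2 + r0 * q3).
  by rewrite -[LHS]mulr1 -U; ring.
have E2 : q2 = - r2 * (r0 * 0 - r1 * q1 - r2 * q2 - r3 * q3) + r3 * (r1 * 0 + r0 * q1 + r3 * q2 - r2 * q3)
   + r0 * (r2 * 0 - r3 * q1 + r0 * q2 + r1 * q3) - r1 * (r3 * 0 + r2 * q1 - r1 * q2 + r0 * q3).
  by rewrite -[LHS]mulr1 -U; ring.
have E3 : q3 = - r3 * (r0 * 0 - r1 * q1 - r2 * q2 - r3 * q3) - r2 * (r1 * 0 + r0 * q1 + r3 * q2 - r2 * q3)
   + r1 * (r2 * 0 - r3 * q1 + r0 * q2 + r1 * q3) + r0 * (r3 * 0 + r2 * q1 - r1 * q2 + r0 * q3).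
  by rewrite -[LHS]mulr1 -U; ring.
by split; [rewrite E1 | rewrite E2 | rewrite E3]; rewrite W0 W1 W2 W3; ring.
Qed.

Lemma Hm_inj (r : 'cV[R]_4) (d : 'cV[R]_3) : unitq r -> Hm r *m Qp R *m d = 0 -> d = 0.
Proof.
move=> /unitqE Hu H; rewrite -mulmxA QpME in H.
have C (k : nat) := congr1 (fun M => qc M k) H.
have c0 := C 0%N; have c1 := C 1%N; have c2 := C 2%N; have c3 := C 3%N.
rewrite /= HmM0 colq0 !colqS // qc0 in c0.
rewrite /= HmM1 colq0 !colqS // qc0 in c1.
rewrite /= HmM2 colq0 !colqS // qc0 in c2.
rewrite /= HmM3 colq0 !colqS // qc0 in c3.
have [e1 e2 e3] := quat_inj Hu c0 c1 c2 c3.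
by apply: cV3P; rewrite qc30.
Qed.

Lemma Qr_inj (r : 'cV[R]_4) (u : 'cV[R]_3) : unitq r -> acos (qc r 0) < pi -> Qr r *m u = 0 -> u = 0.
Proof.
move=> /unitqE Hu Hpi H0.
have C (k : nat) := congr1 (fun M => qc M k) H0.
have c0 := C 0%N; have c1 := C 1%N; have c2 := C 2%N; have c3 := C 3%N.
rewrite /= QrM0 qc0 in c0. rewrite /= QrM1 qc0 in c1.
rewrite /= QrM2 qc0 in c2. rewrite /= QrM3 qc0 in c3.
have S0 : qc3 (nvec r) 0 * qc3 u 0 + qc3 (nvec r) 1 * qc3 u 1 + qc3 (nvec r) 2 * qc3 u 2 = 0.
  rewrite !nvecE //.
  have h : qc r 1 * qc3 u 0 + qc r 2 * qc3 u 1 + qc r 3 * qc3 u 2 = 0.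
    by rewrite -[LHS]opprK c0 oppr0.
  transitivity ((sin (phi r / 2))^-1 * (qc r 1 * qc3 u 0 + qc r 2 * qc3 u 1 + qc r 3 * qc3 u 2)); first by ring.
  by rewrite h mulr0.
have T0 : Theta r != 0.
  rewrite /Theta; case: ifP => [_|/eqP Hphi0]; first by rewrite oner_eq0.
  have hc : -1 <= qc r 0 <= 1 by apply/andP; split; nra.
  have a0 : acos (qc r 0) != 0.
    by apply/eqP => h; apply: Hphi0; rewrite /phi h mulr0.
  have sp : 0 < sin (acos (qc r 0)).
    by apply: sin_gt0_pi; rewrite Hpi andbT lt_neqAle eq_sym a0 acos_ge0.
  by rewrite phiE mulf_neq0 ?invr_eq0 // lt0r_neq0.
have E (a b : R) : Gamma r * a * (qc3 (nvec r) 0 * qc3 u 0 + qc3 (nvec r) 1 * qc3 u 1 + qc3 (nvec r) 2 * qc3 u 2) + Theta r * b = 0 -> b = 0.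
  by rewrite S0 mulr0 add0r => /eqP; rewrite mulf_eq0 (negbTE T0) /= => /eqP.
apply: cV3P; rewrite qc30.
- by apply: (E (qc3 (nvec r) 0)); rewrite -c1; ring.
- by apply: (E (qc3 (nvec r) 1)); rewrite -c2; ring.
- by apply: (E (qc3 (nvec r) 2)); rewrite -c3; ring.
Qed.

Lemma Q8_inj (r p : 'cV[R]_4) : unitq r -> pureq p -> acos (qc r 0) < pi ->
  forall v : 'cV[R]_(3 + 3), Q8 (xof r p) *m v = 0 -> v = 0.
Proof.
move=> Hu Hp Hpi v.
rewrite /Q8 primK pofK // -[v]vsubmxK mul_block_col mul0mx addr0 => /eqP.
rewrite col_mx_eq0 => /andP[/eqP h1 /eqP h2].
have u0 := Qr_inj Hu Hpi h1.
rewrite u0 mulmx0 add0r in h2.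
by rewrite u0 (Hm_inj Hu h2) col_mx0.
Qed.

Lemma sq0 n (w : 'cV[R]_n) : w^T *m w = 0 -> w = 0.
Proof.
move=> H; have := congr1 (fun M : 'M[R]_1 => M 0 0) H; rewrite !mxE => /psumr_eq0P H1.
have H2 : forall i, w^T 0 i * w i 0 = 0.
  move=> i; apply: H1 => // k _; by rewrite mxE -expr2 sqr_ge0.
apply/matrixP => i j; rewrite (ord1 j) mxE.
have := H2 i; rewrite mxE.
by move/eqP; rewrite mulf_eq0 orbb => /eqP.
Qed.

Lemma Dval (F : R -> R) t (d d' : R) : is_derive t 1 F d -> d = d' -> 'D_1 F t = d'.
Proof. by move=> H <-; apply: derive_val. Qed.
Lemma ThetaE (r : 'cV[R]_4) : Theta r = if acos (qc r 0) == 0 then 1 else sin (acos (qc r 0)) / acos (qc r 0).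
Proof. by rewrite /Theta phiE /phi mulf_eq0 pnatr_eq0. Qed.
End S.

Local Close Scope classical_set_scope.

Theorem theorem4 (R : realType) (r p : R -> 'cV[R]_4) (t0 : R) :
  (forall t, unitq (r t)) ->
  (forall t, pureq (p t)) ->
  (forall t, 0 <= phi (r t) < 2 * pi) ->
  derivable (fun t => xof (r t) (p t)) t0 1 ->
  derivable (fun t => dlog (xof (r t) (p t))) t0 1 ->
  let x := fun t => xof (r t) (p t) in
  let y := fun t => dlog (x t) in
  [/\ derive1 x t0 = Q8 (x t0) *m derive1 y t0,
      \rank (Q8 (x t0)) = (3 + 3)%N,
      invmx ((Q8 (x t0))^T *m Q8 (x t0)) *m (Q8 (x t0))^T *m Q8 (x t0) = 1%:M
    & (derive1 x t0 = 0 <-> derive1 y t0 = 0)].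
Proof.
move=> Hu Hpu Hphi Dx Dy x y.
have Hpi t : acos (qc (r t) 0) < pi.
  have := Hphi t; rewrite /phi => /andP[_ h]; lra.
pose a t := logr (r t).
pose b t := (1/2 : R) *: vec3 (p t).
pose h t := (1/2 : R) *: (Hp (p t) *m r t).
have Ey : y = fun t => col_mx (a t) (b t).
  by apply/funext => t; rewrite /y /x /dlog primK pofK.
have Dx' : derivable (fun t => col_mx (r t) (h t)) t0 1 := Dx.
have Dy' : derivable y t0 1 := Dy.
rewrite Ey in Dy'.
have [Dr Dh EDx] := derive_col Dx'.
have [Da Db EDy] := derive_col Dy'.
have EQ8 : Q8 (x t0) = block_mx (Qr (r t0)) 0 ((1/2 : R) *: (Hp (p t0) *m Qr (r t0))) (Hm (r t0) *m Qp R).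
  by rewrite /Q8 /x primK pofK.
have HA : 'D_1 r t0 = Qr (r t0) *m 'D_1 a t0.
  have Hu' t := unitqE (Hu t).
  have Hg (k : nat) t : (k < 3)%N -> qc3 (a t) k = acos (qc (r t) 0) * (sin (acos (qc (r t) 0)))^-1 * qc (r t) k.+1.
    by move=> hk; rewrite /a logrE // phiE mulrA.
  have sq1 t : qc (r t) 1 ^+ 2 <= qc (r t) 1 ^+ 2 + qc (r t) 2 ^+ 2 + qc (r t) 3 ^+ 2.
    have := sqr_ge0 (qc (r t) 2); have := sqr_ge0 (qc (r t) 3); lra.
  have sq2 t : qc (r t) 2 ^+ 2 <= qc (r t) 1 ^+ 2 + qc (r t) 2 ^+ 2 + qc (r t) 3 ^+ 2.
    have := sqr_ge0 (qc (r t) 1); have := sqr_ge0 (qc (r t) 3); lra.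
  have sq3 t : qc (r t) 3 ^+ 2 <= qc (r t) 1 ^+ 2 + qc (r t) 2 ^+ 2 + qc (r t) 3 ^+ 2.
    have := sqr_ge0 (qc (r t) 1); have := sqr_ge0 (qc (r t) 2); lra.
  have G0 t := Hg 0%N t isT; have G1 t := Hg 1%N t isT; have G2 t := Hg 2%N t isT.
  move: (core Hu' Hpi G0 G1 G2 G0 sq1 (@qc_derivable R r t0 0 Dr) (@qc_derivable R r t0 1 Dr) (@qc_derivable R r t0 2 Dr)
     (@qc_derivable R r t0 3 Dr) (@qc_derivable R r t0 1 Dr) (@qc3_derivable R a t0 0 Da) (@qc3_derivable R a t0 1 Da) (@qc3_derivable R a t0 2 Da)
     (@qc3_derivable R a t0 0 Da)) => /= [C0 C1].
  move: (core Hu' Hpi G0 G1 G2 G1 sq2 (@qc_derivable R r t0 0 Dr) (@qc_derivable R r t0 1 Dr) (@qc_derivable R r t0 2 Dr)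
     (@qc_derivable R r t0 3 Dr) (@qc_derivable R r t0 2 Dr) (@qc3_derivable R a t0 0 Da) (@qc3_derivable R a t0 1 Da) (@qc3_derivable R a t0 2 Da)
     (@qc3_derivable R a t0 1 Da)) => /= [_ C2].
  move: (core Hu' Hpi G0 G1 G2 G2 sq3 (@qc_derivable R r t0 0 Dr) (@qc_derivable R r t0 1 Dr) (@qc_derivable R r t0 2 Dr)
     (@qc_derivable R r t0 3 Dr) (@qc_derivable R r t0 3 Dr) (@qc3_derivable R a t0 0 Da) (@qc3_derivable R a t0 1 Da) (@qc3_derivable R a t0 2 Da)
     (@qc3_derivable R a t0 2 Da)) => /= [_ C3].
  have Ea (j : nat) : qc3 ('D_1 a t0) j = 'D_1 (fun t : R => qc3 (a t) j) t0 by rewrite qc3_derive.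
  apply: cV4P; [rewrite QrM0 | rewrite QrM1 | rewrite QrM2 | rewrite QrM3];
    rewrite !qc_derive // !Ea ?nvecE // ?C0 ?C1 ?C2 ?C3 /Gamma ?ThetaE ?phiE;
    set T := (if _ then _ else _);
    set D0 := 'D_1 (fun t : R => qc3 (a t) 0) t0;
    set D1 := 'D_1 (fun t : R => qc3 (a t) 1) t0;
    set D2 := 'D_1 (fun t : R => qc3 (a t) 2) t0; ring.
have HB : 'D_1 h t0 = (1/2 : R) *: (Hp (p t0) *m 'D_1 r t0) + Hm (r t0) *m (Qp R *m 'D_1 b t0).
  have Hpb t (j : nat) : (j < 3)%N -> qc (p t) j.+1 = 2 * qc3 (b t) j.
    by move=> hj; rewrite /b qc3Z vec3E //; field.
  have Hp0 t : qc (p t) 0 = 0 := Hpu t.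
  have I0 := derivableP (@qc_derivable R r t0 0 Dr).
  have I1 := derivableP (@qc_derivable R r t0 1 Dr).
  have I2 := derivableP (@qc_derivable R r t0 2 Dr).
  have I3 := derivableP (@qc_derivable R r t0 3 Dr).
  have J0 := derivableP (@qc3_derivable R b t0 0 Db).
  have J1 := derivableP (@qc3_derivable R b t0 1 Db).
  have J2 := derivableP (@qc3_derivable R b t0 2 Db).
  have Er (k : nat) : qc ('D_1 r t0) k = 'D_1 (fun t : R => qc (r t) k) t0 by rewrite qc_derive.
  have Eb (k : nat) : qc3 ('D_1 b t0) k = 'D_1 (fun t : R => qc3 (b t) k) t0 by rewrite qc3_derive.
  apply: cV4P; rewrite qc_derive // qcD qcZ QpME;
  [rewrite HpM0 HmM0 | rewrite HpM1 HmM1 | rewrite HpM2 HmM2 | rewrite HpM3 HmM3];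
  rewrite !Er colq0 !colqS // !Eb Hp0 !Hpb //;
  under eq_fun => s do rewrite /h qcZ ?HpM0 ?HpM1 ?HpM2 ?HpM3 Hp0 !Hpb //.
  1-4: (eapply Dval; first by repeat first [apply: dM | apply: dB | apply: dD | apply: dC | eassumption]);
    set A0 := 'D_1 (fun t : R => qc (r t) 0) t0;
    set A1 := 'D_1 (fun t : R => qc (r t) 1) t0;
    set A2 := 'D_1 (fun t : R => qc (r t) 2) t0;
    set A3 := 'D_1 (fun t : R => qc (r t) 3) t0;
    set B0 := 'D_1 (fun t : R => qc3 (b t) 0) t0;
    set B1 := 'D_1 (fun t : R => qc3 (b t) 1) t0;
    set B2 := 'D_1 (fun t : R => qc3 (b t) 2) t0.
  1-4: by rewrite /= ?scE; field.
have Hmain : derive1 x t0 = Q8 (x t0) *m derive1 y t0.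
  rewrite !derive1E Ey.
  have -> : 'D_1 x t0 = col_mx ('D_1 r t0) ('D_1 h t0) := EDx.
  rewrite EDy EQ8 mul_block_col mul0mx addr0 HB HA.
  by rewrite -scalemxAl !mulmxA.
have Inj := Q8_inj (Hu t0) (Hpu t0) (Hpi t0).
have Hunit : ((Q8 (x t0))^T *m Q8 (x t0)) \in unitmx.
  rewrite unitmxE unitfE; apply/negP => /det0P [v vn0 hv].
  have w0 : (Q8 (x t0) *m v^T)^T *m (Q8 (x t0) *m v^T) = 0.
    by rewrite trmx_mul trmxK !mulmxA -(mulmxA v) hv mul0mx.
  have := Inj _ (sq0 w0) => /(congr1 trmx); rewrite trmxK trmx0 => v0.
  by rewrite v0 eqxx in vn0.
split => //.
- apply/eqP; rewrite eqn_leq rank_leq_col /=.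
  by rewrite -{1}(mxrank_unit Hunit) mxrankM_maxr.
- by rewrite -mulmxA mulVmx.
- split => H; last by rewrite Hmain H mulmx0.
  by apply: Inj; rewrite -Hmain.
Qed.
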